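(* Let $R_1,R_2,S_1,S_2$ be positive semidefinite $n\times n$ matrices such that $R_1R_2=R_2R_1$ and $S_1S_2=S_2S_1$. Let $R=R_1^{1/2}R_2^{1/2}$ and $S=S_1^{1/2}S_2^{1/2}$. Then $$\lambda_1\big((R^{1/2}SR^{1/2})^2\big)\le \lambda_1\big(R_1^{1/2}S_1R_1^{1/2}\,R_2^{1/2}S_2R_2^{1/2}\big).$$
   Context: $\lambda_1(X)$ denotes the largest eigenvalue of a matrix $X$ with real nonnegative spectrum. Note $R$ and $S$ are positive semidefinite since they are products of commuting positive semidefinite matrices. *)

(* Defs.v *)
From HB Require Import structures.
From mathcomp Require Import all_boot all_order all_algebra.
From mathcomp Require Import boolp.
Set Implicit Arguments. Unset Strict Implicit. Unset Printing Implicit Defensive.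
Import Order.TTheory GRing.Theory Num.Theory.
Local Open Scope ring_scope.

(* Complex-like scalars: any numeric algebraically closed field C
   (e.g. algC, or complex R for an rcfType R); conjugation is Num.conj. *)

Definition adjmx (C : numClosedFieldType) m n (A : 'M[C]_(m, n)) : 'M[C]_(n, m) :=
  (map_mx Num.conj A)^T.

Definition psdmx (C : numClosedFieldType) n (A : 'M[C]_n) : Prop :=
  adjmx A = A /\ forall v : 'cV[C]_n, 0 <= (adjmx v *m A *m v) 0 0.

(* The (unique) positive semidefinite square root A^{1/2} of a PSD matrix A;
   defaults to A if no PSD square root exists (never happens for PSD A). *)
Definition sqrtmx (C : numClosedFieldType) n (A : 'M[C]_n) : 'M[C]_n :=
  match pselect (exists B : 'M[C]_n, psdmx B /\ B *m B = A) with
  | left h => proj1_sig (cid h)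
  | right _ => A
  end.

(* lambda_1(X): the largest eigenvalue of X, for X whose spectrum is real
   (an eigenvalue l such that every eigenvalue a is real and a <= l);
   defaults to 0 if no such eigenvalue exists. *)
Definition lambda1 (C : numClosedFieldType) n (X : 'M[C]_n) : C :=
  match pselect (exists l : C, eigenvalue X l /\
                   forall a : C, eigenvalue X a -> a <= l) with
  | left h => proj1_sig (cid h)
  | right _ => 0
  end.

(* Main.v *)
Require Import Defs.
From mathcomp Require Import all_boot all_order all_algebra.
From mathcomp Require Import boolp.
Import Order.TTheory GRing.Theory Num.Theory.
Local Open Scope ring_scope.
Set Implicit Arguments. Unset Strict Implicit. Unset Printing Implicit Defensive.

Section S.
Variable C : numClosedFieldType.
Local Open Scope sesquilinear_scope.

Lemma adjmxE m n (A : 'M[C]_(m, n)) : adjmx A = A ^t*.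
Proof. by rewrite /adjmx map_trmx. Qed.

Lemma adjmxK m n (A : 'M[C]_(m, n)) : adjmx (adjmx A) = A.
Proof. by rewrite !adjmxE trmxCK. Qed.

Lemma adjmxM m n p (A : 'M[C]_(m, n)) (B : 'M[C]_(n, p)) :
  adjmx (A *m B) = adjmx B *m adjmx A.
Proof. by rewrite !adjmxE trmx_mul map_mxM. Qed.

Lemma vvpos n (v : 'rV[C]_n) : v != 0 -> 0 < (v *m adjmx v) 0 0.
Proof. by move=> /dotmx_is_dotmx; rewrite dotmxE adjmxE. Qed.

Lemma vvge0 n (v : 'rV[C]_n) : 0 <= (v *m adjmx v) 0 0.
Proof. have [->|/vvpos/ltW//] := eqVneq v 0. by rewrite mul0mx mxE. Qed.

Lemma psdP n (A : 'M[C]_n) :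
  psdmx A <-> adjmx A = A /\ forall v : 'rV[C]_n, 0 <= (v *m A *m adjmx v) 0 0.
Proof.
split=> -[hA hv]; split=> // v.
  by have := hv (adjmx v); rewrite adjmxK.
by have := hv (adjmx v); rewrite adjmxK.
Qed.

Lemma qf_diag n (w : 'rV[C]_n) (d : 'rV[C]_n) :
  (w *m diag_mx d *m adjmx w) 0 0 = \sum_j d 0 j * (w 0 j * (w 0 j)^*).
Proof.
rewrite mul_mx_diag !mxE; apply: eq_bigr => j _.
by rewrite !mxE mulrAC mulrC.
Qed.

Lemma qf_diag_ge0 n (w : 'rV[C]_n) (d : 'rV[C]_n) :
  (forall i, 0 <= d 0 i) -> 0 <= (w *m diag_mx d *m adjmx w) 0 0.
Proof.
move=> hd; rewrite qf_diag sumr_ge0 // => j _.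
by rewrite mulr_ge0 ?mul_conjC_ge0.
Qed.

Lemma qf_delta n (i : 'I_n) (d : 'rV[C]_n) :
  ((delta_mx 0 i : 'rV[C]_n) *m diag_mx d *m adjmx (delta_mx 0 i : 'rV[C]_n)) 0 0 = d 0 i.
Proof.
rewrite qf_diag (bigD1 i) //= big1 ?addr0.
  by rewrite mxE !eqxx /= conjC1 !mulr1.
by move=> j /negPf hj; rewrite mxE hj andbF mul0r mulr0.
Qed.

Lemma psd_spec n (A : 'M[C]_n) : psdmx A ->
  exists P : 'M[C]_n, exists d : 'rV[C]_n,
   [/\ P \is unitarymx, A = P^t* *m diag_mx d *m P & forall i, 0 <= d 0 i].
Proof.
move=> /psdP [hA hv].
have nA : A \is normalmx by apply/normalmxP; rewrite -adjmxE hA.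
move/orthomx_spectralP: nA => Aeq.
set P := spectralmx A in Aeq; set d := spectral_diag A in Aeq.
have Pu : P \is unitarymx by apply: spectral_unitarymx.
rewrite invmx_unitary // in Aeq.
exists P, d; split => // i.
have := hv (delta_mx 0 i *m P).
rewrite adjmxM {1}Aeq !mulmxA adjmxE mulmxtVK //.
by rewrite mulmxtVK // qf_delta.
Qed.
Lemma unitKt n (P : 'M[C]_n) : P \is unitarymx -> P^t* *m P = 1%:M.
Proof. by move=> Pu; have := mulmxKtV 1%:M Pu (erefl n); rewrite mul1mx. Qed.

Lemma unitK n (P : 'M[C]_n) : P \is unitarymx -> P *m P^t* = 1%:M.
Proof. by move/unitarymxP. Qed.

Lemma conjK n (P M : 'M[C]_n) : P \is unitarymx ->
  P *m (P^t* *m M *m P) *m P^t* = M.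
Proof. by move=> Pu; rewrite !mulmxA unitK // mul1mx mulmxtVK. Qed.

Lemma conjKt n (P M : 'M[C]_n) : P \is unitarymx ->
  P^t* *m (P *m M *m P^t*) *m P = M.
Proof. by move=> Pu; rewrite !mulmxA unitKt // mul1mx -mulmxA unitKt // mulmx1. Qed.

Lemma adj_spec n (P : 'M[C]_n) (d : 'rV[C]_n) : (forall i, 0 <= d 0 i) ->
  adjmx (P^t* *m diag_mx d *m P) = P^t* *m diag_mx d *m P.
Proof.
move=> hd; rewrite !adjmxM !adjmxE trmxCK mulmxA; congr (_ *m _ *m _).
rewrite tr_diag_mx map_diag_mx; congr diag_mx; apply/matrixP => i j.
rewrite !mxE ord1; exact/conj_Creal/ger0_real.
Qed.

Lemma psd_of_spec n (P : 'M[C]_n) (d : 'rV[C]_n) : (forall i, 0 <= d 0 i) ->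
  psdmx (P^t* *m diag_mx d *m P).
Proof.
move=> hd; apply/psdP; split; first exact: adj_spec.
move=> v; have := qf_diag_ge0 (v *m P^t*) hd.
by rewrite adjmxM !adjmxE trmxCK !mulmxA.
Qed.

Lemma sqrt_ex n (A : 'M[C]_n) : psdmx A -> exists B, psdmx B /\ B *m B = A.
Proof.
move=> /psd_spec [P [d [Pu -> hd]]].
pose e : 'rV[C]_n := \row_j sqrtC (d 0 j).
have he : forall i, 0 <= e 0 i by move=> i; rewrite mxE sqrtC_ge0.
exists (P^t* *m diag_mx e *m P); split; first exact: psd_of_spec.
rewrite -!mulmxA (mulmxA P) unitK // mul1mx; congr (_ *m _).
rewrite mulmxA; congr (_ *m _); apply/matrixP => i j.
rewrite mul_diag_mx !mxE; case: (eqVneq i j) => [->|_]; last by rewrite !mulr0n mulr0.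
by rewrite !mulr1n -expr2 sqrtCK.
Qed.

Lemma sqrtmx_spec n (A : 'M[C]_n) : psdmx A ->
  psdmx (sqrtmx A) /\ sqrtmx A *m sqrtmx A = A.
Proof.
move=> hA; rewrite /sqrtmx; case: pselect => [h|h].
  by case: (cid h).
by exfalso; apply: h; apply: sqrt_ex.
Qed.

Lemma conj_mul n (P A B : 'M[C]_n) : P \is unitarymx ->
  (P^t* *m A *m P) *m (P^t* *m B *m P) = P^t* *m (A *m B) *m P.
Proof. by move=> Pu; rewrite -!mulmxA (mulmxA P) unitK // mul1mx !mulmxA. Qed.

Lemma conj_inj n (P A B : 'M[C]_n) : P \is unitarymx ->
  P^t* *m A *m P = P^t* *m B *m P -> A = B.
Proof. by move=> Pu /(congr1 (fun M => P *m M *m P^t*)) /=; rewrite !conjK. Qed.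

Lemma comm_sqrt n (B X : 'M[C]_n) : psdmx B ->
  X *m (B *m B) = (B *m B) *m X -> X *m B = B *m X.
Proof.
move=> /psd_spec [P [d [Pu -> hd]]].
set D := diag_mx d.
pose Y := P *m X *m P^t*.
have XY : X = P^t* *m Y *m P by rewrite conjKt.
clearbody Y.
rewrite XY !conj_mul // => /conj_inj => /(_ Pu) hY.
suff -> : Y *m D = D *m Y by [].
apply/matrixP => i j; have /matrixP /(_ i j) := hY.
rewrite /D mulmxA.
rewrite -(mulmxA (diag_mx d)) !mul_mx_diag !mul_diag_mx !mxE.
have [->|nz] := eqVneq (Y i j) 0; first by rewrite !(mul0r, mulr0).
move=> e0; have e : d 0 j * d 0 j = d 0 i * d 0 i.
  by apply: (mulfI nz); rewrite mulrA e0 mulrA mulrC.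
suff -> : d 0 j = d 0 i by rewrite mulrC.
apply/eqP; rewrite -(eqrXn2 (_ : (0 < 2)%N)) ?hd // !expr2; apply/eqP.
exact: e.
Qed.
Lemma psd_mul_comm n (A B : 'M[C]_n) : psdmx A -> psdmx B -> A *m B = B *m A ->
  psdmx (A *m B).
Proof.
move=> hA hB AB; have [hQ QQ] := sqrtmx_spec hA.
set Q := sqrtmx A in hQ QQ.
have BQ : B *m Q = Q *m B by apply: comm_sqrt => //; rewrite QQ.
case/psdP: hA => aA _; case/psdP: hB => aB qB; case/psdP: hQ => aQ _.
apply/psdP; split; first by rewrite adjmxM aA aB.
move=> v; rewrite -QQ -(mulmxA Q Q B) -BQ !mulmxA.
by have := qB (v *m Q); rewrite adjmxM aQ !mulmxA.
Qed.

Lemma eig_psd_ge0 n (A : 'M[C]_n) a : psdmx A -> eigenvalue A a -> 0 <= a.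
Proof.
case/psdP => _ hv /eigenvalueP [v va vn0].
have := hv v; rewrite va -scalemxAl mxE.
by rewrite pmulr_lge0 // vvpos.
Qed.

Lemma eig0 n (A : 'M[C]_n) : eigenvalue A 0 = (\det A == 0).
Proof.
apply/eigenvalueP/det0P => -[v].
  by rewrite scale0r => h1 h2; exists v.
by move=> h1 h2; exists v; rewrite ?scale0r.
Qed.

Lemma eig_swap1 n (X Z : 'M[C]_n) a : eigenvalue (X *m Z) a -> eigenvalue (Z *m X) a.
Proof.
have [->|a0] := eqVneq a 0.
  by rewrite !eig0 !det_mulmx mulrC.
move=> /eigenvalueP [v va vn0]; apply/eigenvalueP; exists (v *m X).
  by rewrite mulmxA -(mulmxA v) va scalemxAl.
apply: contraNneq vn0 => h.
have : v *m X *m Z = a *: v by rewrite -mulmxA.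
rewrite h mul0mx => /esym /eqP; rewrite scaler_eq0 (negPf a0) /= => /eqP ->//.
Qed.

Lemma eig_swap n (X Z : 'M[C]_n) a : eigenvalue (X *m Z) a = eigenvalue (Z *m X) a.
Proof. by apply/idP/idP; apply: eig_swap1. Qed.

Lemma eig_sq n (Y : 'M[C]_n) mu : eigenvalue (Y *m Y) mu ->
  exists2 nu, nu * nu = mu & eigenvalue Y nu.
Proof.
move=> /eigenvalueP [v va vn0].
set nu := sqrtC mu.
have nn : nu * nu = mu by rewrite -expr2 sqrtCK.
set w := v *m (Y + nu%:M).
have [w0|wn0] := eqVneq w 0.
  exists (- nu); first by rewrite mulrNN.
  apply/eigenvalueP; exists v => //.
  by apply/eqP; rewrite -subr_eq0 scaleNr opprK -mul_mx_scalar -mulmxDr -/w w0.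
exists nu => //; apply/eigenvalueP; exists w => //.
apply/eqP; rewrite -subr_eq0 -mul_mx_scalar -mulmxBr /w -mulmxA.
rewrite mulmxDl mulmxBr mulmxBr mul_mx_scalar mul_scalar_mx -scalar_mxM nn addrA subrK.
by rewrite mulmxBr va mul_mx_scalar subrr.
Qed.

Lemma psd_gram n (Y : 'M[C]_n) : psdmx (Y *m adjmx Y).
Proof.
apply/psdP; split; first by rewrite adjmxM adjmxK.
by move=> v; rewrite !mulmxA -mulmxA -adjmxM vvge0.
Qed.

Lemma seq_max (s : seq C) : s != [::] -> {in s, forall x, x \is Num.real} ->
  exists2 m, m \in s & {in s, forall y, y <= m}.
Proof.
elim: s => [//|x t IH] _ hr.
have xr : x \is Num.real by apply: hr; rewrite mem_head.
have [-> | tn] := eqVneq t [::].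
  by exists x; rewrite ?mem_head // => y; rewrite inE => /eqP ->.
have [m mt hm] := IH tn (fun y yt => hr y (mem_behead (s := x :: t) yt)).
have mr : m \is Num.real by apply: hr; rewrite inE mt orbT.
case/orP: (real_leVge xr mr) => h.
  exists m; first by rewrite inE mt orbT.
  by move=> y; rewrite inE => /orP [/eqP ->|/hm].
exists x; first by rewrite mem_head.
by move=> y; rewrite inE => /orP [/eqP ->|/hm/le_trans]; [|apply].
Qed.

Lemma fin_max k (i0 : 'I_k) (f : 'I_k -> C) : (forall i, 0 <= f i) ->
  exists i, forall j, f j <= f i.
Proof.
move=> hf.
have h1 : [seq f i | i <- enum 'I_k] != [::].
  by apply/eqP => h; have := map_f f (mem_enum predT i0); rewrite h.
have h2 : {in [seq f i | i <- enum 'I_k], forall x, x \is Num.real}.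
  by move=> _ /mapP [i _ ->]; exact/ger0_real/hf.
have [m /mapP [i _ ->] hm] := seq_max h1 h2.
by exists i => j; apply: hm; apply: map_f; rewrite mem_enum.
Qed.

Lemma qf1 n (w : 'rV[C]_n) : (w *m adjmx w) 0 0 = \sum_j w 0 j * (w 0 j)^*.
Proof. by rewrite !mxE; apply: eq_bigr => j _; rewrite !mxE. Qed.

Lemma psd_max k (i0 : 'I_k) (M : 'M[C]_k) : psdmx M -> exists l,
  [/\ eigenvalue M l, (forall a, eigenvalue M a -> a <= l) &
      forall v : 'rV_k, (v *m M *m adjmx v) 0 0 <= l * (v *m adjmx v) 0 0].
Proof.
move=> /psd_spec [P [d [Pu Me hd]]].
have [i hi] := fin_max i0 hd.
have ray : forall v : 'rV_k, (v *m M *m adjmx v) 0 0 <= d 0 i * (v *m adjmx v) 0 0.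
  move=> v; set w := v *m P^t*.
  have -> : (v *m M *m adjmx v) = w *m diag_mx d *m adjmx w.
    by rewrite Me /w adjmxM !adjmxE trmxCK !mulmxA.
  have -> : (v *m adjmx v) = w *m adjmx w.
    by rewrite /w adjmxM !adjmxE trmxCK !mulmxA -(mulmxA v) unitKt // mulmx1.
  rewrite qf_diag qf1 mulr_sumr; apply: ler_sum => j _.
  by apply: ler_wpM2r; rewrite ?mul_conjC_ge0.
exists (d 0 i); split => //.
  apply/eigenvalueP; exists (delta_mx 0 i *m P).
    by rewrite Me !mulmxA mulmxtVK // -[_ *m diag_mx d]rowE row_diag_mx -scalemxAl.
  apply/eqP => h.
  move: (congr1 (fun X => X *m P^t*) h) => /=.
  rewrite mul0mx mulmxtVK // => /matrixP /(_ 0 i); rewrite !mxE !eqxx /=.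
  by move/eqP; rewrite oner_eq0.
move=> a /eigenvalueP [v va vn0].
have := ray v; rewrite va -scalemxAl mxE -subr_ge0 -mulrBl pmulr_lge0 ?vvpos //.
by rewrite subr_ge0.
Qed.

Lemma adjmxZ m n (a : C) (A : 'M[C]_(m, n)) : adjmx (a *: A) = a^* *: adjmx A.
Proof. by apply/matrixP => i j; rewrite /adjmx !mxE rmorphM. Qed.

Lemma lambda1_cases n (X : 'M[C]_n) (Pr : C -> Prop) : Pr 0 ->
  (forall l, eigenvalue X l -> (forall a, eigenvalue X a -> a <= l) -> Pr l) ->
  Pr (lambda1 X).
Proof.
move=> h0 h1; rewrite /lambda1; case: pselect => [h|_] //.
by case: (cid h) => l [] /=; apply: h1.
Qed.

Lemma lambda1_eq n (X : 'M[C]_n) l : eigenvalue X l ->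
  (forall a, eigenvalue X a -> a <= l) -> lambda1 X = l.
Proof.
move=> el ml; rewrite /lambda1; case: pselect => [h|h].
  case: (cid h) => l' [] /= el' ml'.
  by apply/le_anti; rewrite ml' // ml.
by exfalso; apply: h; exists l.
Qed.

End S.

Unset Implicit Arguments.
Set Strict Implicit.

Theorem lemma2 (C : numClosedFieldType) (n : nat) (R1 R2 S1 S2 : 'M[C]_n) :
  psdmx R1 -> psdmx R2 -> psdmx S1 -> psdmx S2 ->
  R1 *m R2 = R2 *m R1 -> S1 *m S2 = S2 *m S1 ->
  let R := sqrtmx R1 *m sqrtmx R2 in
  let S := sqrtmx S1 *m sqrtmx S2 in
  let T := sqrtmx R *m S *m sqrtmx R in
  lambda1 (T *m T) <=
  lambda1 ((sqrtmx R1 *m S1 *m sqrtmx R1) *m (sqrtmx R2 *m S2 *m sqrtmx R2)).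
Proof.
move=> hR1 hR2 hS1 hS2 cR cS; cbv zeta.
set R := sqrtmx R1 *m sqrtmx R2.
set S := sqrtmx S1 *m sqrtmx S2.
set T := sqrtmx R *m S *m sqrtmx R.
have [pr1 r1r1] := sqrtmx_spec hR1.
have [pr2 r2r2] := sqrtmx_spec hR2.
have [ps1 s1s1] := sqrtmx_spec hS1.
have [ps2 s2s2] := sqrtmx_spec hS2.
move: pr1 r1r1 pr2 r2r2 ps1 s1s1 ps2 s2s2.
rewrite -/R -/S -/T.
set r1 := sqrtmx R1; set r2 := sqrtmx R2; set s1 := sqrtmx S1; set s2 := sqrtmx S2.
move=> pr1 r1r1 pr2 r2r2 ps1 s1s1 ps2 s2s2.
have c12 : r1 *m r2 = r2 *m r1.
  have h1 : R2 *m r1 = r1 *m R2 by apply: comm_sqrt pr1 _; rewrite r1r1 cR.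
  by apply: comm_sqrt pr2 _; rewrite r2r2 h1.
have d12 : s1 *m s2 = s2 *m s1.
  have h1 : S2 *m s1 = s1 *m S2 by apply: comm_sqrt ps1 _; rewrite s1s1 cS.
  by apply: comm_sqrt ps2 _; rewrite s2s2 h1.
have pR : psdmx R := psd_mul_comm pr1 pr2 c12.
have pS : psdmx S := psd_mul_comm ps1 ps2 d12.
have [pq qq] := sqrtmx_spec pR.
move: pq qq; rewrite -/T; set q := sqrtmx R => pq qq.
have [aq _] := pq; have [aS _] := pS; have [aR _] := pR.
have [as1 _] := ps1; have [as2 _] := ps2.
have aT : adjmx T = T.
  by rewrite /T adjmxM (adjmxM _ S) aS aq mulmxA.
pose Y := s2 *m R *m s1.
pose M := Y *m adjmx Y.
have pM : psdmx M := psd_gram Y.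
have e1 : forall a, eigenvalue T a -> eigenvalue Y a.
  move=> a; rewrite /T -mulmxA eig_swap -mulmxA qq /S -mulmxA eig_swap /Y mulmxA //.
set AB := (r1 *m S1 *m r1) *m (r2 *m S2 *m r2).
have e2 : forall a, eigenvalue AB a = eigenvalue M a.
  move=> a.
  have -> : AB = r1 *m (S1 *m r1 *m r2 *m S2 *m r2) by rewrite /AB !mulmxA.
  rewrite eig_swap.
  have -> : S1 *m r1 *m r2 *m S2 *m r2 *m r1 = (S1 *m R *m S2) *m R.
    by rewrite /R -(mulmxA _ r2 r1) -c12 !mulmxA.
  rewrite eig_swap.
  have -> : M = s2 *m (R *m S1 *m R *m s2).
    by rewrite /M /Y (adjmxM (s2 *m R)) (adjmxM s2) as1 as2 aR -s1s1 !mulmxA.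
  by rewrite [in RHS]eig_swap -(mulmxA _ s2 s2) s2s2 !mulmxA.
have pTT : psdmx (T *m T) by have := psd_gram T; rewrite aT.
apply: (lambda1_cases (X := T *m T) (Pr := fun x => x <= lambda1 AB)).
  apply: (lambda1_cases (X := AB) (Pr := fun x => 0 <= x)) => // l; rewrite e2 => el _.
  exact: eig_psd_ge0 pM el.
move=> l el _.
have l0 : 0 <= l := eig_psd_ge0 pTT el.
have [nu nnl /e1 /eigenvalueP [v va vn0]] := eig_sq el.
have [i0 _] : exists i0 : 'I_n, true.
  have : (0 < n)%N.
    rewrite lt0n; apply: contraNneq vn0 => h.
    by apply/eqP/rowP => j; have := ltn_ord j; rewrite {2}h.
  by move=> h; exists (Ordinal h).
have [lm [elm mlm ray]] := psd_max i0 pM.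
have -> : lambda1 AB = lm.
  by apply: lambda1_eq; rewrite ?e2 // => a; rewrite e2; apply: mlm.
have := ray v.
rewrite /M mulmxA -(mulmxA (v *m Y)) -adjmxM va adjmxZ -scalemxAl -scalemxAr.
have vp := vvpos vn0; set W := v *m adjmx v in vp *.
rewrite !mxE mulrA ler_pM2r //.
move=> h; apply: le_trans h; first by rewrite -(ger0_norm l0) -nnl normrM -expr2 normCK.
by move: vp; rewrite /W !mxE.
Qed.
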